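(* Let $\lambda>0$ and $\rho_1,\rho_2\in(0,1)$ with $\rho_1+\rho_2=1$. For an entropy generator $\psi$ consider the condition $$\sum_{j=1}^2\psi''\Big(\frac{u_j}{\rho_j}\Big)\frac1{\rho_j}(\rho_j-u_j)^2\ \ge\ \frac{\mu}{2\lambda}\sum_{j=1}^2\psi'\Big(\frac{u_j}{\rho_j}\Big)(u_j-\rho_j)\quad\text{for all }u\in[0,1]^2,\ u_1+u_2=1.$$ This condition holds with $$1\ge\frac{\mu}{2\lambda}=\begin{cases}1 & \text{for }\psi=\psi_2,\\ 2\min\{\rho_1,\rho_2\} & \text{for }\psi=\psi_3,\\ 2-2\sqrt{1-3\rho_2(1-\rho_2)}>0 & \text{for }\psi=\psi_4.\end{cases}$$
   Context: For $p>1$, $\psi_p(\sigma)=\sigma^p-1-p(\sigma-1)$ on $\sigma\ge0$. *)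

(* Defs.v *)
From HB Require Import structures.
From mathcomp Require Import all_boot all_order all_algebra.
From mathcomp Require Import all_classical all_reals all_analysis.
Set Implicit Arguments. Unset Strict Implicit. Unset Printing Implicit Defensive.
Import Order.TTheory GRing.Theory Num.Theory.
Import numFieldNormedType.Exports.
Local Open Scope ring_scope.

Definition psi (R : realType) (p : nat) (s : R) : R :=
  s ^+ p - 1 - p%:R * (s - 1).

Definition entropy_cond (R : realType) (f : R -> R) (rho1 rho2 c : R) : Prop :=
  forall u1 u2 : R, 0 <= u1 <= 1 -> 0 <= u2 <= 1 -> u1 + u2 = 1 ->
    c * ((derive1 f (u1 / rho1)) * (u1 - rho1) + (derive1 f (u2 / rho2)) * (u2 - rho2))
    <= (derive1n 2 f (u1 / rho1)) * rho1^-1 * (rho1 - u1) ^+ 2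
       + (derive1n 2 f (u2 / rho2)) * rho2^-1 * (rho2 - u2) ^+ 2.

(* Main.v *)
Require Import Defs.
From HB Require Import structures.
From mathcomp Require Import all_boot all_order all_algebra.
From mathcomp Require Import all_classical all_reals all_analysis.
From mathcomp Require Import ring lra.
Import Order.TTheory GRing.Theory Num.Theory.
Local Open Scope ring_scope.

Lemma isd_psi (R : realType) p (x : R) :
  is_derive x 1 (psi p) (p%:R * x ^+ p.-1 - p%:R).
Proof.
have -> : psi p = (@id R) ^+ p - cst 1 - p%:R *: ((@id R) - cst 1).
  by apply/funext => s; rewrite /psi /= !fctE.
apply: is_derive_eq.
by rewrite /GRing.scale /= !subr0 !mulr1.
Qed.

#[local] Existing Instance isd_psi.

Lemma d1psi (R : realType) p (x : R) :
  derive1 (psi p) x = p%:R * x ^+ p.-1 - p%:R.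
Proof. by rewrite derive1E derive_val. Qed.

Lemma d2psi (R : realType) p (x : R) :
  derive1n 2 (psi p) x = p%:R * (p.-1%:R * x ^+ p.-2).
Proof.
rewrite derive1nS derive1n1.
have -> : derive1 (psi p) = p%:R *: (@id R) ^+ p.-1 - cst p%:R.
  by apply/funext => s; rewrite d1psi /= !fctE.
rewrite derive1E.
apply: derive_val.
apply: is_derive_eq.
by rewrite /GRing.scale /= !subr0 !mulr1.
Qed.

Lemma case2 (R : realType) (a b : R) : 0 < a < 1 -> 0 < b < 1 -> a + b = 1 ->
  entropy_cond (psi 2) a b 1.
Proof.
move=> /andP[a0 a1] /andP[b0 b1] ab u1 u2 _ _ hu.
rewrite !d1psi !d2psi /=.
have eb : b = 1 - a by lra.
have eu : u2 = 1 - u1 by lra.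
have a0' : a != 0 by rewrite gt_eqF.
have b0' : 1 - a != 0 by rewrite gt_eqF // subr_gt0.
rewrite eu eb.

rewrite le_eqVlt; apply/orP; left; apply/eqP.
by field; rewrite a0' b0'.
Qed.

Lemma case3 (R : realType) (a b : R) : 0 < a < 1 -> 0 < b < 1 -> a + b = 1 ->
  entropy_cond (psi 3) a b (2 * Num.min a b).
Proof.
move=> /andP[a0 a1] /andP[b0 b1] ab u1 u2 /andP[u10 u11] /andP[u20 u21] hu.
rewrite !d1psi !d2psi /=.
have eb : b = 1 - a by lra.
have eu : u2 = 1 - u1 by lra.
have a0' : a != 0 by rewrite gt_eqF.
have b0' : 1 - a != 0 by rewrite gt_eqF // subr_gt0.
have hbr : 0 <= 2 * (1 - 2 * Num.min a b) * a * b
              + (2 - 2 * Num.min a b) * (u1 - a) * (b - a).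
  case: (lerP a b) => hab.
    have -> : 2 * (1 - 2 * a) * a * b + (2 - 2 * a) * (u1 - a) * (b - a)
       = 2 * (b - a) * b * u1 by rewrite eb; ring.
    by apply: mulr_ge0 => //; apply: mulr_ge0; lra.
  have -> : 2 * (1 - 2 * b) * a * b + (2 - 2 * b) * (u1 - a) * (b - a)
     = 2 * (a - b) * a * u2 by rewrite eu eb; ring.
  by apply: mulr_ge0 => //; apply: mulr_ge0; lra.
move: hbr; set c := Num.min a b; rewrite eu eb => hbr.
rewrite -subr_ge0.
set Y := (X in X - _); set X := (X in _ - X).
have -> : Y - X = 3 * (u1 - a) ^+ 2 *
   (2 * (1 - 2 * c) * a * (1 - a) + (2 - 2 * c) * (u1 - a) * (1 - a - a))
   / (a ^+ 2 * (1 - a) ^+ 2).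
  by rewrite /Y /X; field; rewrite a0' b0'.
apply: divr_ge0; last by apply: mulr_ge0; apply: exprn_ge0; lra.
apply: mulr_ge0 => //; apply: mulr_ge0; [lra | exact: sqr_ge0].
Qed.

Lemma case4 (R : realType) (a b : R) : 0 < a < 1 -> 0 < b < 1 -> a + b = 1 ->
  entropy_cond (psi 4) a b (2 - 2 * Num.sqrt (1 - 3 * b * (1 - b))).
Proof.
move=> /andP[a0 a1] /andP[b0 b1] ab u1 u2 _ _ hu.
rewrite !d1psi !d2psi /=.
set s := Num.sqrt _.
have hs0 : 0 <= s by apply: sqrtr_ge0.
have hs2 : s ^+ 2 = 1 - 3 * b * (1 - b) by rewrite sqr_sqrtr //; nra.
have eb : b = 1 - a by lra.
have eu : u2 = 1 - u1 by lra.
have a0' : a != 0 by rewrite gt_eqF.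
have b0' : 1 - a != 0 by rewrite gt_eqF // subr_gt0.
move: hs2; rewrite eu eb => hs2.
set c := 2 - 2 * s.
set A := (3 - c) * (a ^+ 3 + (1 - a) ^+ 3).
set B := 3 * (2 - c) * a * (1 - a) * (1 - a - a).
set C := 3 * a ^+ 2 * (1 - a) ^+ 2 * (1 - c).
set t := u1 - a.
have Apos : 0 < A.
  rewrite /A /c; apply: mulr_gt0; first lra.
  nra.
have key : 4 * A * C - B ^+ 2 = 0.
  have -> : 4 * A * C - B ^+ 2 = 12 * a ^+ 2 * (1 - a) ^+ 2 *
    ((4 * s ^+ 2 - 1) * (a ^+ 3 + (1 - a) ^+ 3) - 3 * s ^+ 2 * (1 - a - a) ^+ 2).
    by rewrite /A /B /C /c; ring.
  rewrite hs2; ring.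
have gge : 0 <= A * t ^+ 2 + B * t + C.
  have h4 : 4 * A * (A * t ^+ 2 + B * t + C) = (2 * A * t + B) ^+ 2 + (4 * A * C - B ^+ 2)
    by ring.
  rewrite key addr0 in h4.
  have : 0 <= 4 * A * (A * t ^+ 2 + B * t + C) by rewrite h4; exact: sqr_ge0.
  rewrite pmulr_rge0 //; lra.
rewrite -subr_ge0.
set Y := (X in X - _); set X := (X in _ - X).
have -> : Y - X = 4 * t ^+ 2 * (A * t ^+ 2 + B * t + C)
   / (a ^+ 3 * (1 - a) ^+ 3).
  by rewrite /Y /X /A /B /C /t; field; rewrite a0' b0'.
apply: divr_ge0; last by apply: mulr_ge0; apply: exprn_ge0; lra.
apply: mulr_ge0 => //; apply: mulr_ge0; [lra | exact: sqr_ge0].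
Qed.

Theorem lemma1 (R : realType) (lambda rho1 rho2 : R) :
  0 < lambda -> 0 < rho1 < 1 -> 0 < rho2 < 1 -> rho1 + rho2 = 1 ->
  (forall mu : R, mu / (2 * lambda) = 1 ->
     entropy_cond (psi 2) rho1 rho2 (mu / (2 * lambda)) /\ mu / (2 * lambda) <= 1)
  /\ (forall mu : R, mu / (2 * lambda) = 2 * Num.min rho1 rho2 ->
     entropy_cond (psi 3) rho1 rho2 (mu / (2 * lambda)) /\ mu / (2 * lambda) <= 1)
  /\ (forall mu : R,
        mu / (2 * lambda) = 2 - 2 * Num.sqrt (1 - 3 * rho2 * (1 - rho2)) ->
     entropy_cond (psi 4) rho1 rho2 (mu / (2 * lambda)) /\ mu / (2 * lambda) <= 1
     /\ 0 < mu / (2 * lambda)).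
Proof.
move=> _ h1 h2 h12; split; [|split].
- move=> mu ->; split; first exact: case2.
  exact: lexx.
- move=> mu ->; split; first exact: case3.
  move: h1 h2 => /andP[? ?] /andP[? ?].
  by case: (lerP rho1 rho2) => ?; lra.
- move=> mu ->; split; first exact: case4.
  move: h1 h2 => /andP[? ?] /andP[? ?].
  set s := Num.sqrt _.
  have hs0 : 0 <= s by apply: sqrtr_ge0.
  have hs2 : s ^+ 2 = 1 - 3 * rho2 * (1 - rho2) by rewrite sqr_sqrtr //; nra.
  have q1 : 1 / 4 <= s ^+ 2.
    have h := sqr_ge0 (rho2 - 1 / 2); rewrite expr2 in h; rewrite hs2; nra.
  have q2 : s ^+ 2 < 1 by rewrite hs2; nra.
  have s1 : 1 / 2 <= s.
    rewrite leNgt; apply/negP => hlt.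
    have : s ^+ 2 < 1 / 4 by rewrite expr2; nra.
    lra.
  have s2 : s < 1.
    rewrite ltNge; apply/negP => hle.
    have : 1 <= s ^+ 2 by rewrite expr2; nra.
    lra.
  split; lra.
Qed.
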